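(* For every $n\ge1$, every $n\times n$ Hermitian matrix $A$ and every $1\le m\le n$, $$Y_{n,m}(A)\succ X_m(A),$$ i.e. the concatenation of $\binom{n-1}{m-1}$ copies of the eigenvalue vector of $A$ majorizes the vector of all eigenvalues of all $m\times m$ principal submatrices of $A$.
   Context: $\lambda(A)$ is the eigenvalue vector of $A$ with multiplicity; $X_m(A)$ is the vector listing the eigenvalues, with multiplicity, of all $\binom nm$ principal $m\times m$ submatrices of $A$; $Y_{n,m}(A)$ is the concatenation of $\binom{n-1}{m-1}$ copies of $\lambda(A)$. For $x,y\in\mathbb R^N$, $x\succ y$ means $\sum_{i=1}^k x^{\downarrow}_i\ge\sum_{i=1}^k y^{\downarrow}_i$ for $k=1,\dots,N$ with equality at $k=N$, where $x^{\downarrow}$ is the non-increasing rearrangement. *)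

(* Defs.v *)
(* complex numbers are R[i] = complex R (mathcomp-real-closed)
   over R : realType, so R[i] is (a model of) the field of complex numbers. *)
From HB Require Import structures.
From mathcomp Require Import all_boot all_order all_algebra.
From mathcomp Require Import sesquilinear complex.
From mathcomp Require Import reals.
Set Implicit Arguments. Unset Strict Implicit. Unset Printing Implicit Defensive.
Import Order.TTheory GRing.Theory Num.Theory.
Local Open Scope ring_scope.

Section Defs.
Variable R : realType.
Local Notation C := R[i].

(* eigenvalues with multiplicity: the roots (with multiplicity) of the
   characteristic polynomial, which splits since C is algebraically closed *)
Definition eigvalsC n (A : 'M[C]_n) : seq C :=
  projT1 (closed_field_poly_normal (char_poly A)).

(* lambda(A): for Hermitian A the eigenvalues are real; we record their
   real parts as a vector of reals *)
Definition lambda n (A : 'M[C]_n) : seq R := map (@complex.Re R) (eigvalsC A).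

Definition psubmx n (A : 'M[C]_n) (T : {set 'I_n}) : 'M[C]_#|T| :=
  \matrix_(i < #|T|, j < #|T|) A (enum_val i) (enum_val j).

Definition Xm n (m : nat) (A : 'M[C]_n) : seq R :=
  flatten [seq lambda (psubmx A T) | T in [set T : {set 'I_n} | #|T| == m]].

Definition Ynm n (m : nat) (A : 'M[C]_n) : seq R :=
  flatten (nseq 'C(n.-1, m.-1) (lambda A)).

End Defs.

Definition majorizes (R : realDomainType) (x y : seq R) : Prop :=
  size x = size y /\
  (forall k, (1 <= k <= size x)%N ->
     \sum_(z <- take k (sort >=%R y)) z <= \sum_(z <- take k (sort >=%R x)) z) /\
  \sum_(z <- x) z = \sum_(z <- y) z.

(* Main.v *)
Require Import Defs.
From HB Require Import structures.
From mathcomp Require Import all_boot all_order all_algebra.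
From mathcomp Require Import fingroup perm.
From mathcomp Require Import sesquilinear complex spectral.
From mathcomp Require Import reals.
From mathcomp Require Import ring lra.
Set Implicit Arguments. Unset Strict Implicit. Unset Printing Implicit Defensive.
Import Order.TTheory GRing.Theory Num.Theory Num.Def.
Local Open Scope ring_scope.
Section ListLemmas.
Variable R : realFieldType.

Definition topsum k (s : seq R) := \sum_(z <- take k (sort >=%R s)) z.

Lemma ge_trans : transitive (>=%R : rel R).
Proof. by move=> x y z /= h1 h2; apply: le_trans h2 h1. Qed.
Lemma ge_refl : reflexive (>=%R : rel R).
Proof. by move=> x /=. Qed.
Lemma ge_total : total (>=%R : rel R).
Proof. by move=> x y /=; apply: le_total. Qed.

Lemma sorted_sort_ge (s : seq R) : sorted >=%R (sort >=%R s).
Proof. exact: (sort_sorted ge_total). Qed.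

Lemma perm_sort_ge (s : seq R) : perm_eq (sort >=%R s) s.
Proof. by rewrite perm_sort perm_refl. Qed.

Lemma size_sort_ge (s : seq R) : size (sort >=%R s) = size s.
Proof. by rewrite size_sort. Qed.

Lemma sum_cst_seq (T : Type) (r : seq T) (c : R) : \sum_(z <- r) c = c *+ size r.
Proof. by elim: r => [|x r IH]; rewrite ?big_nil ?big_cons ?IH ?mulr0n // mulrS. Qed.

Lemma sum_nseq (T : Type) (c : nat) (L : T) (F : T -> R) :
  \sum_(l <- nseq c L) F l = F L *+ c.
Proof. by elim: c => [|c IH]; rewrite ?big_nil ?big_cons ?IH ?mulr0n // mulrS. Qed.

Lemma sum_map_enum (I : finType) (x : I -> R) (F : R -> R) :
  \sum_(z <- [seq x i | i <- enum I]) F z = \sum_i F (x i).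
Proof. by rewrite big_map big_enum. Qed.

Section Thr.
Variables (k : nat) (s : seq R).
Hypothesis hk : (0 < k <= size s)%N.
Let ss := sort >=%R s.
Let t := nth 0 ss k.-1.

Lemma ss_take z : z \in take k ss -> t <= z.
Proof.
have Hs := sorted_sort_ge s.
move/andP: hk => [k0 ks].
have kss : (k <= size ss)%N by rewrite size_sort_ge.
move=> hz; case: (elimT (nthP 0) hz) => i; rewrite size_takel // => ik <-.
rewrite nth_take //.
have := sorted_leq_nth ge_trans ge_refl 0 Hs.
move=> /(_ i k.-1); rewrite !inE; apply.
- by apply: leq_trans ik kss.
- by rewrite (leq_trans _ kss) // prednK.
- by rewrite -ltnS prednK.
Qed.

Lemma ss_drop {j z} : (k.-1 <= j)%N -> z \in drop j ss -> z <= t.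
Proof.
have Hs := sorted_sort_ge s.
move/andP: hk => [k0 ks].
have kss : (k <= size ss)%N by rewrite size_sort_ge.
move=> hj hz; case: (elimT (nthP 0) hz) => i; rewrite size_drop => ik <-.
rewrite nth_drop.
have := sorted_leq_nth ge_trans ge_refl 0 Hs.
move=> /(_ k.-1 (j + i)%N); rewrite !inE; apply.
- by rewrite (leq_trans _ kss) // prednK.
- by rewrite -ltn_subRL.
- by rewrite (leq_trans hj) // leq_addr.
Qed.

Lemma thr_eq : topsum k s = k%:R * t + \sum_(z <- s) Num.max (z - t) 0.
Proof.
move/andP: hk => [k0 ks].
have kss : (k <= size ss)%N by rewrite size_sort_ge.
rewrite -(perm_big _ (perm_sort_ge s)) -/ss /topsum -/ss.
rewrite -[in X in _ = _ + X](cat_take_drop k ss) big_cat /=.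
rewrite [X in _ = _ + (_ + X)]big1_seq; last first.
  move=> z /andP[_ /(ss_drop (leq_pred k))] zt.
  by apply/max_idPr; rewrite subr_le0.
rewrite addr0 [X in _ = _ + X]big_seq.
rewrite [X in _ = _ + X](eq_bigr (fun z => z - t)); last first.
  by move=> z /ss_take zt; apply/max_idPl; rewrite subr_ge0.
rewrite -big_seq sumrB sum_cst_seq size_takel //.
rewrite -mulr_natl; ring.
Qed.

Lemma thr_phi : exists phi : R -> R, (forall z, 0 <= phi z <= 1) /\
  \sum_(z <- s) phi z = k%:R /\ topsum k s = \sum_(z <- s) phi z * z.
Proof.
move/andP: hk => [k0 ks].
have kss : (k <= size ss)%N by rewrite size_sort_ge.
pose a := \sum_(z <- s) (((t < z)%R)%:R : R).
pose b := \sum_(z <- s) (((z == t)%R)%:R : R).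
have ha : a <= k.-1%:R.
  rewrite /a -(perm_big _ (perm_sort_ge s)) -/ss.
  rewrite -(cat_take_drop k.-1 ss) big_cat /= [X in _ + X]big1_seq ?addr0; last first.
    move=> z /andP[_ hz]; have := ss_drop (leqnn _) hz.
    by rewrite leNgt => /negbTE ->.
  apply: le_trans (_ : \sum_(z <- take k.-1 ss) 1 <= _).
    by apply: ler_sum => z _; case: (t < z)%R; rewrite ?ler01.
  rewrite sum_cst_seq -[X in X <= _]mulr_natl mulr1 ler_nat size_take.
  by case: ifP => // /negbT; rewrite -leqNgt.
have hab : k%:R <= a + b.
  rewrite /a /b -big_split /= -(perm_big _ (perm_sort_ge s)) -/ss.
  rewrite -(cat_take_drop k ss) big_cat /=.
  apply: le_trans (_ : \sum_(z <- take k ss) 1 + 0 <= _).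
    by rewrite addr0 sum_cst_seq size_takel // -mulr_natl mulr1.
  apply: lerD.
    rewrite big_seq [X in _ <= X]big_seq; apply: ler_sum => z /ss_take.
    rewrite le_eqVlt => /orP[/eqP->|->]; first by rewrite ltxx eqxx add0r.
    by rewrite /= lerDl ler0n.
  by apply: sumr_ge0 => z _; apply: addr_ge0; apply: ler0n.
have hb : 0 < b.
  have : k.-1%:R < k%:R :> R by rewrite ltr_nat prednK.
  lra.
pose al := (k%:R - a) / b.
have al0 : 0 <= al.
  rewrite /al divr_ge0 ?(ltW hb) //.
  have : k.-1%:R <= k%:R :> R by rewrite ler_nat leq_pred.
  lra.
have al1 : al <= 1.
  by rewrite /al ler_pdivrMr // mul1r; lra.
exists (fun z => if t < z then 1 else if z == t then al else 0).
have phiE z : (if t < z then 1 else if z == t then al else 0) =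
   ((t < z)%R)%:R + al * ((z == t)%R)%:R.
  case: (ltgtP t z) => [tz|zt|e]; rewrite ?mulr0 ?addr0 ?mulr1 ?add0r //=.
split.
  move=> z; case: ifP => _; first by rewrite ler01 lexx.
  by case: ifP=> _; rewrite ?lexx ?al0 ?al1 ?ler01.
have sumphi : \sum_(z <- s) (if t < z then 1 else if z == t then al else 0) = k%:R.
  rewrite (eq_bigr _ (fun z _ => phiE z)) big_split /= -mulr_sumr -/a -/b.
  rewrite /al mulfVK ?gt_eqF //; lra.
split => //.
rewrite thr_eq -/ss -/t.
rewrite [RHS](eq_bigr (fun z => (if t < z then 1 else if z == t then al else 0) * (z - t)
   + (if t < z then 1 else if z == t then al else 0) * t)); last by move=> z _; rewrite mulrBr subrK.
rewrite big_split /= -mulr_suml sumphi [LHS]addrC; congr (_ + _).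
apply: eq_bigr => z _; case: (ltgtP t z) => [tz|zt|e].
- by rewrite mul1r; apply/max_idPl; rewrite subr_ge0 ltW.
- by rewrite mul0r; apply/max_idPr; rewrite subr_le0 ltW.
- by rewrite e subrr mulr0 maxxx.
Qed.
End Thr.

Lemma knap (I : finType) (x u : I -> R) (c k : nat) :
  (0 < k <= c * #|I|)%N ->
  (forall i, 0 <= u i <= c%:R) -> \sum_i u i = k%:R ->
  \sum_i u i * x i <= topsum k (flatten (nseq c [seq x i | i <- enum I])).
Proof.
move=> hk hu hsum.
set Ys := flatten _.
have hk' : (0 < k <= size Ys)%N.
  by rewrite size_flatten /shape map_nseq sumn_nseq size_map -cardE mulnC.
rewrite (thr_eq hk').
set t := nth _ _ _.
have -> : \sum_(z <- Ys) Num.max (z - t) 0 = (\sum_i Num.max (x i - t) 0) *+ c.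
  by rewrite big_flatten /= sum_nseq sum_map_enum.
have -> : \sum_i u i * x i = \sum_i u i * (x i - t) + k%:R * t.
  rewrite -hsum mulr_suml -big_split /=; apply: eq_bigr => i _; ring.
rewrite addrC lerD2l -mulr_natl mulr_sumr; apply: ler_sum => i _.
have /andP[u0 uc] := hu i.
case: (leP (x i - t) 0) => h.
  by rewrite mulr0; apply: mulr_ge0_le0.
by apply: ler_wpM2r => //; exact: ltW.
Qed.

End ListLemmas.
Lemma char_poly_conj (F : comNzRingType) p (Q P D : 'M[F]_p) :
  Q *m P = 1%:M -> char_poly (Q *m D *m P) = char_poly D.
Proof.
move=> QP.
rewrite /char_poly /char_poly_mx.
set f := map_mx (@polyC F).
have QP' : f Q *m f P = 1%:M by rewrite -map_mxM QP map_mx1.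
have -> : 'X%:M - f (Q *m D *m P) = f Q *m ('X%:M - f D) *m f P.
  rewrite /f !map_mxM -/f mulmxBr mulmxBl; congr (_ - _).
  by rewrite scalar_mxC -mulmxA QP' mulmx1.
by rewrite !det_mulmx mulrAC -det_mulmx QP' det1 mul1r.
Qed.

Lemma count_sub n m (l : 'I_n) : (0 < m)%N ->
  (\sum_(T : {set 'I_n} | #|T| == m) ((l \in T) : nat))%N = 'C(n.-1, m.-1).
Proof.
move=> m0.
pose g (l : 'I_n) := (\sum_(T : {set 'I_n} | #|T| == m) ((l \in T) : nat))%N.
have sym l1 l2 : g l1 = g l2.
  pose h := fun T : {set 'I_n} => tperm l1 l2 @: T.
  have hK : involutive h.
    by move=> T; rewrite /h -imset_comp (eq_imset _ (tpermK l1 l2)) imset_id.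
  rewrite /g (reindex_inj (inv_inj hK)); apply: eq_big => [T|T _] /=.
    by rewrite card_imset //; apply: perm_inj.
  by rewrite /h -[l1 in l1 \in _](tpermR l1 l2) mem_imset //; apply: perm_inj.
have tot : (\sum_l g l = m * 'C(n, m))%N.
  rewrite /g exchange_big /=.
  rewrite (eq_bigr (fun _ => m)) => [|T /eqP <-]; last first.
    by rewrite -sum1_card [RHS]big_mkcond.
  by rewrite sum_nat_cond_const card_draws card_ord mulnC.
have : (n * g l = n * 'C(n.-1, m.-1))%N.
  rewrite mul_bin_diag prednK // -tot.
  by rewrite (eq_bigr (fun _ => g l)) => [|i _]; [rewrite big_const_ord iter_addn_0 mulnC | apply: sym].
by move/eqP; rewrite eqn_pmul2l ?(leq_ltn_trans (leq0n l) (ltn_ord l)) // => /eqP.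
Qed.

Section Spec.
Variable R : realType.
Local Notation C := (complex R).
Local Open Scope sesquilinear_scope.

Section Sp.
Variables (p : nat) (B : 'M[C]_p).
Local Notation U := (spectralmx B).
Local Notation d := (spectral_diag B).

Lemma UUt : U *m U^t* = 1%:M.
Proof. exact/unitarymxP/spectral_unitarymx. Qed.

Lemma UtU : U^t* *m U = 1%:M.
Proof. by rewrite -invmx_unitary ?spectral_unitarymx // mulVmx // spectral_unit. Qed.

Lemma spec_decomp : B \is normalmx -> B = U^t* *m diag_mx d *m U.
Proof.
by move/orthomx_spectralP => {1}->; rewrite invmx_unitary // spectral_unitarymx.
Qed.

Lemma eigvals_perm : B \is normalmx ->
  perm_eq (eigvalsC B) [seq d 0 j | j <- enum 'I_p].
Proof.
move=> nB; apply: prod_XsubC_eq.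
rewrite big_map big_enum /= /eigvalsC.
case: closed_field_poly_normal => r /= hr.
rewrite (monicP (char_poly_monic B)) scale1r in hr.
rewrite -hr.
have -> : char_poly B = char_poly (diag_mx d).
  by rewrite {1}(spec_decomp nB) char_poly_conj // UtU.
rewrite char_poly_trig ?diag_mx_is_trig //.
by apply: eq_bigr => j _; rewrite mxE eqxx mulr1n.
Qed.

Lemma lambda_perm : B \is normalmx ->
  perm_eq (lambda B) [seq complex.Re (d 0 j) | j <- enum 'I_p].
Proof.
move=> nB; have := perm_map (@complex.Re R) (eigvals_perm nB).
by rewrite -map_comp.
Qed.

Lemma sum_lambda (F : R -> R) : B \is normalmx ->
  \sum_(z <- lambda B) F z = \sum_j F (complex.Re (d 0 j)).
Proof. by move=> nB; rewrite (perm_big _ (lambda_perm nB)) sum_map_enum. Qed.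

Lemma size_lambda : B \is normalmx -> size (lambda B) = p.
Proof. by move=> nB; rewrite (perm_size (lambda_perm nB)) size_map size_enum_ord. Qed.

Lemma d_real : B \is hermsymmx -> forall j, ((complex.Re (d 0 j))%:C)%C = d 0 j.
Proof.
move=> hB j; apply: RRe_real.
by move/mxOverP: (hermitian_spectral_diag_real hB); apply.
Qed.

Lemma trace_conj (M : 'M[C]_p) : \tr (U^t* *m M *m U) = \tr M.
Proof. by rewrite mxtrace_mulC mulmxA UUt mul1mx. Qed.

Lemma trC_mul m n (X : 'M[C]_(m, n)) (Y : 'M[C]_(n, p)) : (X *m Y)^t* = Y^t* *m X^t*.
Proof. by rewrite trmx_mul map_mxM. Qed.

Definition wrow (phi : R -> R) : 'rV[C]_p :=
  \row_j ((phi (complex.Re (d 0 j)))%:C)%C.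

Definition Qmx (phi : R -> R) : 'M[C]_p := U^t* *m diag_mx (wrow phi) *m U.

Lemma trQB phi : B \is hermsymmx ->
  \tr (Qmx phi *m B) = ((\sum_j phi (complex.Re (d 0 j)) * complex.Re (d 0 j))%:C)%C.
Proof.
move=> hB; have nB := hermitian_normalmx hB.
have eB := spec_decomp nB.
have -> : Qmx phi *m B = U^t* *m (diag_mx (wrow phi) *m diag_mx d) *m U.
  rewrite /Qmx {3}eB.
  by rewrite !mulmxA -(mulmxA (U^t* *m diag_mx (wrow phi)) U) UUt mulmx1.
rewrite trace_conj mulmx_diag mxtrace_diag rmorph_sum /=.
apply: eq_bigr => j _; rewrite mxE /wrow mxE.
by rewrite rmorphM /= (d_real hB).
Qed.



Lemma trQ phi : \tr (Qmx phi) = ((\sum_j phi (complex.Re (d 0 j)))%:C)%C.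
Proof.
rewrite /Qmx trace_conj mxtrace_diag rmorph_sum /=.
by apply: eq_bigr => j _; rewrite !mxE.
Qed.

Lemma quad_form (w : 'rV[C]_p) (z : 'rV[C]_p) :
  (z *m diag_mx w *m z^t*) 0 0 = \sum_j w 0 j * (z 0 j * conjC (z 0 j)).
Proof.
by rewrite mul_mx_diag !mxE; apply: eq_bigr => j _; rewrite !mxE mulrAC mulrC.
Qed.


Lemma quadQ phi : (forall z, 0 <= phi z <= 1) -> forall y : 'rV[C]_p,
  0 <= (y *m Qmx phi *m y^t*) 0 0 <= (y *m y^t*) 0 0.
Proof.
move=> hphi y.
pose z := y *m U^t*.
have zt : z^t* = U *m y^t* by rewrite /z trC_mul trmxCK.
have -> : y *m Qmx phi *m y^t* = z *m diag_mx (wrow phi) *m z^t*.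
  by rewrite zt /Qmx /z !mulmxA.
have -> : y *m y^t* = z *m diag_mx (const_mx 1) *m z^t*.
  by rewrite zt /z diag_const_mx mulmx1 -mulmxA (mulmxA (U^t*)) UtU mul1mx.
rewrite !quad_form; apply/andP; split.
  apply: sumr_ge0 => j _; rewrite !mxE; apply: mulr_ge0; last by rewrite -normCK exprn_ge0.
  by rewrite ler0c; case/andP: (hphi (complex.Re (d 0 j))).
apply: ler_sum => j _; rewrite [wrow _ _ _]mxE [const_mx _ _ _]mxE mul1r.
apply: ler_piMl; first by rewrite -normCK exprn_ge0.
by rewrite -(rmorph1 (real_complex R)) lecR; case/andP: (hphi (complex.Re (d 0 j))).
Qed.




Lemma tr_d : B \is hermsymmx -> ((\sum_j complex.Re (d 0 j))%:C)%C = \tr B.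
Proof.
move=> hB; rewrite {2}(spec_decomp (hermitian_normalmx hB)) trace_conj mxtrace_diag.
rewrite rmorph_sum; apply: eq_bigr => j _; exact: (d_real hB).
Qed.

End Sp.
Lemma rowform n p (M : 'M[C]_(n, p)) (X : 'M[C]_p) i :
  (M *m X *m M^t*) i i = (row i M *m X *m (row i M)^t*) 0 0.
Proof.
rewrite !mxE; apply: eq_bigr => k _; rewrite !mxE; congr (_ * _).
by apply: eq_bigr => l _; rewrite !mxE.
Qed.

Lemma dot_form p (x : 'rV[C]_p) : (x *m x^t*) 0 0 = \sum_j x 0 j * conjC (x 0 j).
Proof. by rewrite mxE; apply: eq_bigr => j _; rewrite !mxE. Qed.

Section Assembly.
Variables (n m : nat) (A : 'M[C]_n).
Hypothesis hA : A \is hermsymmx.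
Local Notation V := (spectralmx A).
Local Notation dl := (spectral_diag A).

Definition Emx (T : {set 'I_n}) : 'M[C]_(n, #|T|) :=
  \matrix_(i, j) ((i == enum_val j)%:R).

Lemma mE_entry p (M : 'M[C]_(p, n)) T i j : (M *m Emx T) i j = M i (enum_val j).
Proof.
rewrite mxE (bigD1 (enum_val j)) //= mxE eqxx mulr1 big1 ?addr0 // => l lj.
by rewrite mxE (negbTE lj) mulr0.
Qed.

Lemma vE_entry (v : 'rV[C]_n) T j : (v *m Emx T) 0 j = v 0 (enum_val j).
Proof. exact: mE_entry. Qed.

Lemma Et_entry p (M : 'M[C]_(n, p)) T i j : ((Emx T)^t* *m M) i j = M (enum_val i) j.
Proof.
have -> : (Emx T)^t* *m M = (M^t* *m Emx T)^t* by rewrite trC_mul trmxCK.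
by rewrite mxE [X in conjC X]mxE mE_entry !mxE conjCK.
Qed.

Lemma psub_E T : psubmx A T = (Emx T)^t* *m A *m Emx T.
Proof. by apply/matrixP => j k; rewrite mE_entry Et_entry !mxE. Qed.

Lemma psub_herm T : psubmx A T \is hermsymmx.
Proof.
have hA' : A^t* = A.
  by have := is_hermitianmxP _ _ _ hA; rewrite expr0 scale1r => <-.
apply/is_hermitianmxP; rewrite expr0 scale1r psub_E.
by rewrite !trC_mul trmxCK hA' !mulmxA.
Qed.

Lemma tr_psub T : \tr (psubmx A T) = \sum_(l in T) A l l.
Proof. by rewrite [RHS]big_enum_val; apply: eq_bigr => j _; rewrite mxE. Qed.

Lemma yE (v : 'rV[C]_n) T :
  ((v *m Emx T) *m (v *m Emx T)^t*) 0 0 = \sum_(l in T) v 0 l * conjC (v 0 l).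
Proof.
by rewrite dot_form [RHS]big_enum_val; apply: eq_bigr => j _; rewrite vE_entry.
Qed.

Lemma EtE T : (Emx T)^t* *m Emx T = 1%:M.
Proof.
by apply/matrixP => j k; rewrite Et_entry !mxE (inj_eq enum_val_inj).
Qed.

Lemma tr_id (X : 'M[C]_n) : \tr X = \sum_i (row i V *m X *m (row i V)^t*) 0 0.
Proof.
have -> : \tr X = \tr (V *m X *m V^t*) by rewrite mxtrace_mulC mulmxA UtU mul1mx.
by rewrite /mxtrace; apply: eq_bigr => i _; rewrite rowform.
Qed.

Lemma tr_XA (X : 'M[C]_n) :
  \tr (X *m A) = \sum_i (row i V *m X *m (row i V)^t*) 0 0 * dl 0 i.
Proof.
rewrite {1}(spec_decomp (hermitian_normalmx hA)) !mulmxA mxtrace_mulC !mulmxA.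
by rewrite mul_mx_diag /mxtrace; apply: eq_bigr => i _; rewrite mxE rowform.
Qed.

Hypothesis hm : (0 < m)%N.
Local Notation S := [set T : {set 'I_n} | #|T| == m].
Local Notation c := 'C(n.-1, m.-1).

Lemma sumS (F : 'I_n -> C) :
  \sum_(T in S) \sum_(l in T) F l = c%:R * \sum_l F l.
Proof.
rewrite (eq_bigr (fun T : {set 'I_n} => \sum_l ((l \in T)%:R * F l))); last first.
  by move=> T _; rewrite big_mkcond; apply: eq_bigr => l _; case: (l \in T); rewrite ?mul1r ?mul0r.
rewrite exchange_big mulr_sumr; apply: eq_bigr => l _.
rewrite -mulr_suml -natr_sum; congr (_%:R * _).
rewrite -(count_sub l hm); apply: eq_bigl => T; by rewrite inE.
Qed.

Definition yv i T := row i V *m Emx T.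
Definition uu (phi : R -> R) i : C :=
  \sum_(T in S) (yv i T *m Qmx (psubmx A T) phi *m (yv i T)^t*) 0 0.

Lemma key_tr phi : \sum_(T in S) \tr (Qmx (psubmx A T) phi *m psubmx A T)
  = \sum_i uu phi i * dl 0 i.
Proof.
have e T : \tr (Qmx (psubmx A T) phi *m psubmx A T) =
    \tr ((Emx T *m Qmx (psubmx A T) phi *m (Emx T)^t*) *m A).
  by rewrite {2}psub_E !mulmxA mxtrace_mulC !mulmxA.
rewrite (eq_bigr _ (fun T _ => e T)) (eq_bigr _ (fun T _ => tr_XA _)) exchange_big.
apply: eq_bigr => i _; rewrite /uu mulr_suml; apply: eq_bigr => T _.
by rewrite /yv trC_mul !mulmxA.
Qed.

Lemma key_Q phi : \sum_(T in S) \tr (Qmx (psubmx A T) phi) = \sum_i uu phi i.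
Proof.
have e T : \tr (Qmx (psubmx A T) phi) =
    \tr (Emx T *m Qmx (psubmx A T) phi *m (Emx T)^t*).
  by rewrite [RHS]mxtrace_mulC mulmxA EtE mul1mx.
rewrite (eq_bigr _ (fun T _ => e T)) (eq_bigr _ (fun T _ => tr_id _)) exchange_big.
apply: eq_bigr => i _; rewrite /uu; apply: eq_bigr => T _.
by rewrite /yv trC_mul !mulmxA.
Qed.

Lemma key_u phi : (forall z, 0 <= phi z <= 1) -> forall i, 0 <= uu phi i <= c%:R.
Proof.
move=> hphi i; apply/andP; split.
  by apply: sumr_ge0 => T _; case/andP: (quadQ (psubmx A T) hphi (yv i T)).
apply: le_trans (_ : \sum_(T in S) (yv i T *m (yv i T)^t*) 0 0 <= _).
  by apply: ler_sum => T _; case/andP: (quadQ (psubmx A T) hphi (yv i T)).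
rewrite /yv (eq_bigr _ (fun T _ => yE _ _)).
rewrite (eq_bigr (fun T : {set 'I_n} => \sum_(l in T) V i l * conjC (V i l))); last first.
  by move=> T _; apply: eq_bigr => l _; rewrite !mxE.
rewrite sumS.
have -> : \sum_l V i l * conjC (V i l) = (V *m V^t*) i i.
  by rewrite mxE; apply: eq_bigr => l _; rewrite !mxE.
by rewrite UUt mxE eqxx mulr1.
Qed.

End Assembly.
End Spec.


Lemma topsum_perm (R : realFieldType) k (s1 s2 : seq R) : perm_eq s1 s2 -> topsum k s1 = topsum k s2.
Proof.
move=> h; rewrite /topsum; congr (\sum_(z <- take k _) z).
apply/perm_sortP => //; [exact: ge_total | exact: ge_trans |].
by move=> x y /andP[h1 h2]; apply: le_anti; apply/andP; split; [exact: h2 | exact: h1].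
Qed.

Lemma perm_flatten_nseq (T : eqType) c (s1 s2 : seq T) :
  perm_eq s1 s2 -> perm_eq (flatten (nseq c s1)) (flatten (nseq c s2)).
Proof. by move=> h; elim: c => [|c IH] //=; rewrite perm_cat. Qed.


Theorem theorem4p5 (R : realType) (n : nat) (A : 'M[complex R]_n) (m : nat) :
  (1 <= n)%N -> A \is hermsymmx -> (1 <= m <= n)%N ->
  majorizes (Ynm m A) (Xm m A).
Proof.
move=> hn hA /andP[hm hmn].
have nA := hermitian_normalmx hA.
pose S := [set T : {set 'I_n} | #|T| == m].
pose c := 'C(n.-1, m.-1).
have sumX (F : R -> R) : \sum_(z <- Xm m A) F z =
   \sum_(T in S) \sum_j F (complex.Re (spectral_diag (psubmx A T) 0 j)).
  rewrite /Xm big_flatten /= big_map big_enum /=; apply: eq_bigr => T _.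
  by rewrite sum_lambda // hermitian_normalmx // psub_herm.
have sumY (F : R -> R) : \sum_(z <- Ynm m A) F z =
    (\sum_i F (complex.Re (spectral_diag A 0 i))) *+ c.
  by rewrite /Ynm big_flatten /= sum_nseq sum_lambda.
have szY : size (Ynm m A) = (c * n)%N.
  by rewrite /Ynm size_flatten /shape map_nseq sumn_nseq size_lambda // mulnC.
have szX : size (Xm m A) = (c * n)%N.
  rewrite /Xm size_flatten /shape -map_comp sumnE big_map big_enum /=.
  rewrite (eq_bigr (fun _ => m)) => [|T]; last first.
    by rewrite inE => /eqP <-; apply: size_lambda; apply: hermitian_normalmx; apply: psub_herm.
  by rewrite sum_nat_const card_draws card_ord /c [RHS]mulnC mul_bin_diag prednK // mulnC.
split; first by rewrite szX szY.
split.
  move=> k /andP[k1 kN]; rewrite szY in kN.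
  have hkX : (0 < k <= size (Xm m A))%N by rewrite szX k1.
  have [phi [hphi [sphi tX]]] := thr_phi hkX.
  change (topsum k (Xm m A) <= topsum k (Ynm m A)).
  rewrite tX.
  pose ur i := complex.Re (uu m A phi i).
  pose xr i := complex.Re (spectral_diag A 0 i).
  have hur i : uu m A phi i = ((ur i)%:C)%C.
    by apply/esym/RRe_real; apply: ger0_real; case/andP: (key_u A hm hphi i).
  have e1 : \sum_(z <- Xm m A) phi z * z = \sum_i ur i * xr i.
    apply: (@complexI R).
    rewrite sumX rmorph_sum /=.
    rewrite (eq_bigr (fun T => \tr (Qmx (psubmx A T) phi *m psubmx A T))); last first.
      by move=> T _; rewrite trQB // psub_herm.
    rewrite key_tr // rmorph_sum; apply: eq_bigr => i _.
    by rewrite hur rmorphM /= (d_real hA).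
  have e2 : \sum_i ur i = k%:R.
    apply: (@complexI R); rewrite -sphi sumX !rmorph_sum /=.
    rewrite (eq_bigr (fun T => \tr (Qmx (psubmx A T) phi))); last first.
      by move=> T _; rewrite trQ.
    by rewrite key_Q; apply: eq_bigr => i _; rewrite hur.
  have hu i : 0 <= ur i <= c%:R.
    have := key_u A hm hphi i.
    have -> : (c%:R : complex R) = ((c%:R : R)%:C)%C by rewrite rmorph_nat.
    by rewrite hur ler0c lecR.
  rewrite e1.
  apply: le_trans (knap xr (k:=k) (c:=c) _ hu e2) _.
    by rewrite card_ord k1.
  by rewrite /Ynm (topsum_perm k (perm_flatten_nseq c (lambda_perm nA))).
rewrite (sumY id) (sumX id) /=.
apply: (@complexI R); rewrite rmorphMn.
transitivity (\tr A *+ c); first by congr (_ *+ _); exact: (tr_d hA).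
transitivity (\sum_(T in S) \tr (psubmx A T)); last first.
  rewrite rmorph_sum; apply: eq_bigr => T _; apply/esym; exact: (tr_d (psub_herm hA T)).
rewrite (eq_bigr (fun T : {set 'I_n} => \sum_(l in T) A l l)); last by move=> T _; rewrite tr_psub.
rewrite sumS // mulr_natl; apply: (congr1 (fun x => x *+ c)); rewrite /mxtrace; by apply: eq_bigr => i _.
Qed.
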